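(* For every integer $d\ge3$ and all $p_1,\dots,p_d\in(0,1)$, the first rencontre-time $J^d$ (see context) satisfies $E(J^d)=\infty$.
   Context: Let $d\ge2$ be an integer and $p_1,\dots,p_d\in(0,1)$. Let $\{X^j_k\}_{k\ge1}$, $j=1,\dots,d$, be independent sequences, the $j$-th consisting of i.i.d. Bernoulli random variables with success parameter $p_j$ (all $X^j_k$ mutually independent). Set $S^j(n)=\sum_{i=1}^n X^j_i$. The first rencontre-time is $J^d=\inf\{n\ge1: S^1(n)=S^2(n)=\dots=S^d(n)\}$ with $\inf\emptyset=\infty$. *)

(* Defs.v *)
From HB Require Import structures.
From mathcomp Require Import all_boot all_order all_algebra.
From mathcomp Require Import all_classical all_reals all_analysis.
Set Implicit Arguments. Unset Strict Implicit. Unset Printing Implicit Defensive.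
Import Order.TTheory GRing.Theory Num.Theory.
Local Open Scope classical_set_scope.
Local Open Scope ring_scope.

(* For boolean variables this is equivalent to mutual independence of the
   generated sigma-algebras. *)
Definition mutually_independent_bool (d0 : measure_display) (T : measurableType d0)
  (R : realType) (P : probability T R) (I : eqType) (Y : I -> T -> bool) : Prop :=
  forall (F : seq I) (b : I -> bool), uniq F ->
    P (\bigcap_(i in [set i | i \in F]) [set t | Y i t = b i]) =
    (\prod_(i <- F) P [set t | Y i t = b i])%E.

(* S^j(n) = X^j_1 + ... + X^j_n ; here the sequence is indexed from 0,
   i.e. X j 0 plays the role of X^j_1. *)
Definition partial_sum (d : nat) (T : Type) (X : 'I_d -> nat -> T -> bool)
  (j : 'I_d) (n : nat) (t : T) : nat :=
  (\sum_(i < n) (X j i t : nat))%N.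

(* First rencontre time J^d = inf {n >= 1 : S^1(n) = ... = S^d(n)},
   valued in the extended reals, with inf emptyset = +oo. *)
Definition rencontre_time (R : realType) (d : nat) (T : Type)
  (X : 'I_d -> nat -> T -> bool) (t : T) : \bar R :=
  ereal_inf [set (n%:R)%:E | n in
    [set n : nat | (0 < n)%N /\ forall j j' : 'I_d,
        partial_sum X j n t = partial_sum X j' n t]].

(* Main.v *)
Require Import Defs.
From HB Require Import structures.
From mathcomp Require Import all_boot all_order all_algebra.
From mathcomp Require Import all_classical all_reals all_analysis.
From mathcomp Require Import measurable_realfun.
From mathcomp Require Import ring lra zify.
Import Order.TTheory GRing.Theory Num.Theory.
Local Open Scope classical_set_scope.
Local Open Scope ring_scope.

Set Implicit Arguments. Unset Strict Implicit. Unset Printing Implicit Defensive.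

Section PathL.
Variable R : realFieldType.
Definition newb (d : nat -> R) m := all (fun j => d j != d m) (iota 0 m).
Definition cnt (d : nat -> R) N := \sum_(1 <= m < N.+1) ((newb d m)%:R : R).

Lemma path_count (d : nat -> R) N : d 0 = 0 -> (forall k, `|d k.+1 - d k| <= 1) ->
  `|d N| <= cnt d N.
Proof.
move=> d0 dstep.
suff [lo [hi [Hb _ _ Hc]]] : exists lo hi,
  [/\ forall j, (j <= N)%N -> lo <= d j <= hi,
      exists2 j, (j <= N)%N & d j = hi,
      exists2 j, (j <= N)%N & d j = lo & hi - lo <= cnt d N].
  have /andP[a1 a2] := Hb 0%N (leq0n _).
  have /andP[b1 b2] := Hb N (leqnn _).
  rewrite d0 in a1 a2.
  by apply: le_trans Hc; rewrite ler_norml; apply/andP; split; lra.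
elim: N => [|N [lo [hi [Hb [j1 j1N e1] [j2 j2N e2] Hc]]]].
  exists 0, 0; split.
  - by move=> j; rewrite leqn0 => /eqP ->; rewrite d0 lexx.
  - by exists 0%N.
  - by exists 0%N.
  - by rewrite /cnt big_geq // subrr.
have cS : cnt d N.+1 = cnt d N + (newb d N.+1)%:R by rewrite /cnt big_nat_recr.
have hN := Hb N (leqnn _).
have st := dstep N.
rewrite ler_norml in st.
case/andP: st => st1 st2.
case/andP: hN => hN1 hN2.
have [hx|xh] := ltrP hi (d N.+1).
  have nw : newb d N.+1.
    apply/allP => j; rewrite mem_iota add0n => /andP[_ jN].
    have /andP[_ h] := Hb j jN.
    by rewrite lt_eqF // (le_lt_trans h hx).
  exists lo, (d N.+1); split.
  - move=> j; rewrite leq_eqVlt => /orP[/eqP->|jN].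
      by rewrite lexx andbT; have := Hb j1 j1N; rewrite e1 => /andP[]; lra.
    have /andP[h1 h2] := Hb j jN.
    by rewrite h1 /=; lra.
  - by exists N.+1.
  - by exists j2 => //; apply: leqW.
  - by rewrite cS nw /=; lra.
have [xl|lx] := ltrP (d N.+1) lo.
  have nw : newb d N.+1.
    apply/allP => j; rewrite mem_iota add0n => /andP[_ jN].
    have /andP[h _] := Hb j jN.
    by rewrite gt_eqF // (lt_le_trans xl h).
  exists (d N.+1), hi; split.
  - move=> j; rewrite leq_eqVlt => /orP[/eqP->|jN].
      by rewrite lexx /=; have := Hb j1 j1N; rewrite e1 => /andP[]; lra.
    have /andP[h1 h2] := Hb j jN.
    by rewrite h2 andbT; lra.
  - by exists j1 => //; apply: leqW.
  - by exists N.+1.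
  - by rewrite cS nw /=; lra.
exists lo, hi; split.
- move=> j; rewrite leq_eqVlt => /orP[/eqP->|jN]; first by rewrite lx xh.
  exact: Hb.
- by exists j1 => //; apply: leqW.
- by exists j2 => //; apply: leqW.
- rewrite cS; have : 0 <= ((newb d N.+1)%:R : R) by [].
  lra.
Qed.
End PathL.

Section Walk.
Variable R : realFieldType.
Variable A : eqType.
Variable steps : seq A.
Variable pi : A -> R.
Variable st : A -> R.
Hypothesis pi_ge0 : forall a, 0 <= pi a.
Hypothesis pi_sum : \sum_(a <- steps) pi a = 1.

Fixpoint EN (N : nat) (f : seq A -> R) : R :=
  if N is N'.+1 then \sum_(a <- steps) pi a * EN N' (fun s => f (a :: s))
  else f [::].

Lemma EN_ext N f g : (forall s, size s = N -> f s = g s) -> EN N f = EN N g.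
Proof.
elim: N f g => [|N IH] f g H /=; first by apply: H.
apply: eq_bigr => a _; congr (_ * _); apply: IH => s Hs; apply: H => /=.
by rewrite Hs.
Qed.

Lemma EN_add N f g : EN N (fun s => f s + g s) = EN N f + EN N g.
Proof.
elim: N f g => [//|N IH] f g /=.
by rewrite -big_split /=; apply: eq_bigr => a _; rewrite IH mulrDr.
Qed.

Lemma EN_scale N c f : EN N (fun s => c * f s) = c * EN N f.
Proof.
elim: N f => [//|N IH] f /=.
by rewrite mulr_sumr; apply: eq_bigr => a _; rewrite IH mulrCA.
Qed.

Lemma EN_const N c : EN N (fun _ => c) = c.
Proof.
elim: N => [//|N IH] /=.
by under eq_bigr do rewrite IH; rewrite -mulr_suml pi_sum mul1r.
Qed.

Lemma EN_mono N f g : (forall s, f s <= g s) -> EN N f <= EN N g.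
Proof.
elim: N f g => [|N IH] f g H /=; first exact: H.
by apply: ler_sum => a _; apply: ler_wpM2l => //; apply: IH.
Qed.

Lemma EN_sum N (I : Type) (r : seq I) (F : I -> seq A -> R) :
  EN N (fun s => \sum_(i <- r) F i s) = \sum_(i <- r) EN N (F i).
Proof.
elim: r => [|i r IH].
  by rewrite big_nil (EN_ext (g := fun _ => 0)) ?EN_const // => s _; rewrite big_nil.
rewrite big_cons -IH -EN_add; apply: EN_ext => s _; by rewrite big_cons.
Qed.

Lemma EN_abs N f : `|EN N f| <= EN N (fun s => `|f s|).
Proof.
rewrite ler_norml; apply/andP; split.
  rewrite -mulN1r -EN_scale; apply: EN_mono => s.
  by rewrite mulN1r lerNl ler_normr lexx orbT.
by apply: EN_mono => s; apply: ler_norm.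
Qed.

Lemma EN_snoc N f : EN N.+1 f =
  EN N (fun u => \sum_(a <- steps) pi a * f (rcons u a)).
Proof.
elim: N f => [//|N IH] f.
transitivity (\sum_(a <- steps) pi a * EN N.+1 (fun s => f (a :: s))) => //.
by apply: eq_bigr => a _; rewrite IH.
Qed.

Lemma EN_rev N f : EN N (fun s => f (rev s)) = EN N f.
Proof.
elim: N f => [//|N IH] f.
rewrite [RHS]EN_snoc.
transitivity (\sum_(a <- steps) pi a * EN N (fun s => f (rcons (rev s) a))).
  by rewrite /=; apply: eq_bigr => a _; congr (_ * _); apply: EN_ext => s _; rewrite rev_cons.
under eq_bigr => a _ do rewrite (IH (fun v => f (rcons v a))).
rewrite EN_sum; apply: eq_bigr => a _.
by rewrite EN_scale.
Qed.

Lemma EN_cat m k f : EN (m + k) f = EN m (fun u => EN k (fun v => f (u ++ v))).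
Proof.
elim: m f => [//|m IH] f.
by rewrite addSn /=; apply: eq_bigr => a _; rewrite IH.
Qed.

Lemma EN_revm N m f : (m <= N)%N ->
  EN N (fun s => f (rev (take m s) ++ drop m s)) = EN N f.
Proof.
move=> mN; rewrite -(subnKC mN) !EN_cat.
rewrite -(EN_rev _ (fun w => EN (N - m) (fun v => f (w ++ v)))).
apply: EN_ext => u Hu; apply: EN_ext => v _.
by rewrite -Hu take_size_cat // drop_size_cat.
Qed.


Lemma EN_mono_sz N f g : (forall s, size s = N -> f s <= g s) -> EN N f <= EN N g.
Proof.
elim: N f g => [|N IH] f g H /=; first exact: H.
apply: ler_sum => a _; apply: ler_wpM2l => //; apply: IH => s Hs.
by apply: H; rewrite /= Hs.
Qed.

Hypothesis st_bd : forall a, `|st a| <= 1.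

Definition Dsum (s : seq A) := \sum_(a <- s) st a.
Definition Dt k s := Dsum (take k s).
Definition Qb m s := all (fun k => Dt k s != 0) (iota 1 m).

Lemma Dsum_cat u v : Dsum (u ++ v) = Dsum u + Dsum v.
Proof. by rewrite /Dsum big_cat. Qed.

Lemma Dt_revm k m s : (k <= m)%N -> (m <= size s)%N ->
  Dt k (rev (take m s) ++ drop m s) = Dt m s - Dt (m - k) s.
Proof.
move=> km ms; have szt : size (take m s) = m by rewrite size_takel.
rewrite /Dt takel_cat ?size_rev ?szt // take_rev szt /Dsum big_rev.
have := cat_take_drop (m - k) (take m s).
rewrite take_takel ?leq_subr // => e.
rewrite -{2}e big_cat /=; rewrite addrC addrK //.
Qed.

Lemma Qb_revm m s : (m <= size s)%N ->
  Qb m (rev (take m s) ++ drop m s) = newb (fun k => Dt k s) m.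
Proof.
move=> ms; apply/allP/allP => H j.
  rewrite mem_iota add0n => /andP[_ jm].
  have := H (m - j)%N; rewrite mem_iota add1n ltnS leq_subr subn_gt0 jm.
  rewrite Dt_revm ?leq_subr // subKn ?(ltnW jm) // subr_eq0 eq_sym.
  by apply.
rewrite mem_iota add1n ltnS => /andP[j1 jm].
rewrite Dt_revm // subr_eq0 eq_sym; apply: H.
by rewrite mem_iota add0n /= ltn_subrL j1 /= (leq_trans j1 jm).
Qed.

Lemma Dt_step k s : `|Dt k.+1 s - Dt k s| <= 1.
Proof.
rewrite /Dt; have := cat_take_drop k (take k.+1 s).
rewrite take_takel // => e; rewrite -{1}e Dsum_cat addrC addKr.
have : (size (drop k (take k.+1 s)) <= 1)%N.
  by rewrite size_drop size_take_min leq_subLR addn1 geq_minl.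
case: (drop k (take k.+1 s)) => [|a [|b t]] //= _.
  by rewrite /Dsum big_nil normr0.
by rewrite /Dsum big_cons big_nil addr0.
Qed.

Lemma cnt_ge N s : size s = N -> `|Dsum s| <= cnt (fun k => Dt k s) N.
Proof.
move=> sN.
have -> : Dsum s = Dt N s by rewrite /Dt -sN take_size.
apply: path_count => [|k]; last exact: Dt_step.
by rewrite /Dt take0 /Dsum big_nil.
Qed.

(* reversal applied: sum of probabilities of no-return events *)
Lemma sumQ_ge N : EN N (fun s => `|Dsum s|) <=
  \sum_(1 <= m < N.+1) EN N (fun s => ((Qb m s)%:R : R)).
Proof.
have -> : \sum_(1 <= m < N.+1) EN N (fun s => ((Qb m s)%:R : R)) =
          \sum_(1 <= m < N.+1) EN N (fun s => ((newb (fun k => Dt k s) m)%:R : R)).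
  rewrite !big_nat; apply: eq_bigr => m /andP[_ mN].
  rewrite -(@EN_revm N m (fun s => ((Qb m s)%:R : R))) //.
  by apply: EN_ext => s sz; rewrite Qb_revm // sz.
rewrite -EN_sum; apply: EN_mono_sz => s sz.
by have := cnt_ge sz; rewrite /cnt big_nat_cond [X in _ <= X]big_nat_cond.
Qed.

Definition mu := \sum_(a <- steps) pi a * st a.
Definition Ysum (s : seq A) := \sum_(a <- s) (st a - mu).

Lemma Ysum_cat u v : Ysum (u ++ v) = Ysum u + Ysum v.
Proof. by rewrite /Ysum big_cat. Qed.

Lemma EN_S N f : EN N.+1 f = EN 1 (fun u => EN N (fun v => f (u ++ v))).
Proof. by rewrite -add1n EN_cat. Qed.

Lemma EN_poly N (c0 c1 c2 c3 c4 : R) :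
  EN N (fun s => c0 + c1 * Ysum s + c2 * Ysum s ^+ 2 + c3 * Ysum s ^+ 3 + c4 * Ysum s ^+ 4) =
  c0 + c1 * EN N Ysum + c2 * EN N (fun s => Ysum s ^+ 2) +
  c3 * EN N (fun s => Ysum s ^+ 3) + c4 * EN N (fun s => Ysum s ^+ 4).
Proof. by rewrite !EN_add !EN_scale EN_const. Qed.

Lemma EN1_Y : EN 1 Ysum = 0.
Proof.
rewrite /= /mu; under eq_bigr do rewrite /Ysum big_cons big_nil addr0 mulrBr.
by rewrite sumrB -mulr_suml pi_sum mul1r subrr.
Qed.

Lemma EN_Y N : EN N Ysum = 0.
Proof.
elim: N => [|N IH]; first by rewrite /= /Ysum big_nil.
rewrite EN_S.
rewrite (EN_ext (g := fun u => Ysum u)) ?EN1_Y // => u _.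
rewrite (EN_ext (g := fun v => Ysum u + Ysum v)); last by move=> v _; rewrite Ysum_cat.
by rewrite EN_add IH EN_const addr0.
Qed.

Definition sig2 := EN 1 (fun s => Ysum s ^+ 2).
Definition m4 := EN 1 (fun s => Ysum s ^+ 4).

Lemma EN_Y2 N : EN N (fun s => Ysum s ^+ 2) = N%:R * sig2.
Proof.
elim: N => [|N IH]; first by rewrite /= /Ysum big_nil expr0n mul0r.
rewrite EN_S.
rewrite (EN_ext (g := fun u => Ysum u ^+ 2 + N%:R * sig2)); last first.
  move=> u _.
  rewrite (EN_ext (g := fun v => Ysum u ^+ 2 + (2 * Ysum u) * Ysum v + 1 * Ysum v ^+ 2
     + 0 * Ysum v ^+ 3 + 0 * Ysum v ^+ 4)); last by move=> v _; rewrite Ysum_cat; ring.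
  by rewrite EN_poly EN_Y IH; ring.
by rewrite EN_add EN_const -/sig2 -natr1; ring.
Qed.

Lemma EN_Y4 N : EN N (fun s => Ysum s ^+ 4) =
  N%:R * m4 + 3 * N%:R * (N%:R - 1) * sig2 ^+ 2.
Proof.
elim: N => [|N IH]; first by rewrite /= /Ysum big_nil; ring.
rewrite EN_S.
rewrite (EN_ext (g := fun u => 0 + 4 * EN N (fun s => Ysum s ^+ 3) * Ysum u
  + 6 * (N%:R * sig2) * Ysum u ^+ 2 + 0 * Ysum u ^+ 3 + 1 * Ysum u ^+ 4
  + (N%:R * m4 + 3 * N%:R * (N%:R - 1) * sig2 ^+ 2))); last first.
  move=> u _.
  rewrite (EN_ext (g := fun v => Ysum u ^+ 4 + (4 * Ysum u ^+ 3) * Ysum v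
     + (6 * Ysum u ^+ 2) * Ysum v ^+ 2
     + (4 * Ysum u) * Ysum v ^+ 3 + 1 * Ysum v ^+ 4)); last by move=> v _; rewrite Ysum_cat; ring.
  by rewrite EN_poly EN_Y IH EN_Y2; ring.
rewrite EN_add EN_poly EN_const EN1_Y -/sig2 -/m4.
rewrite -natr1; ring.
Qed.

Lemma mu_bd : `|mu| <= 1.
Proof.
rewrite /mu; apply: le_trans (ler_norm_sum _ _ _) _.
rewrite -pi_sum; apply: ler_sum => a _.
by rewrite normrM ger0_norm // ler_piMr.
Qed.

Lemma Y1_bd s : size s = 1%N -> `|Ysum s| <= 2.
Proof.
case: s => [|a [|b t]] //= _.
rewrite /Ysum big_cons big_nil addr0.
apply: le_trans (ler_normB _ _) _.
have := st_bd a; have := mu_bd; lra.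
Qed.

Lemma sig2_ge0 : 0 <= sig2.
Proof.
rewrite /sig2 -(EN_const 1 0); apply: EN_mono => s; exact: sqr_ge0.
Qed.

Lemma sig2_le : sig2 <= 4.
Proof.
rewrite /sig2 -(EN_const 1 4); apply: EN_mono_sz => s /Y1_bd.
rewrite -real_normK ?num_real // => h.
have h0 : 0 <= `|Ysum s| by [].
nra.
Qed.

Lemma m4_le : m4 <= 16.
Proof.
rewrite /m4 -(EN_const 1 16); apply: EN_mono_sz => s /Y1_bd.
have -> : Ysum s ^+ 4 = (`|Ysum s| ^+ 2) ^+ 2 by rewrite real_normK ?num_real // -exprM.
move=> h; have h0 : 0 <= `|Ysum s| by [].
set z := `|Ysum s| in h h0 *.
have : z ^+ 2 <= 4 by nra.
move=> h2; have : 0 <= z ^+ 2 by exact: sqr_ge0.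
nra.
Qed.

Lemma quart_ineq (a y : R) : 0 <= a ->
  a ^+ 2 * y ^+ 2 <= a ^+ 3 * `|y| + y ^+ 4.
Proof.
move=> a0.
have -> : y ^+ 4 = (`|y| ^+ 2) ^+ 2 by rewrite real_normK ?num_real // -exprM.
rewrite -[y ^+ 2]real_normK ?num_real //.
have z0 : 0 <= `|y| by [].
set z := `|y|.
have [za|az] := lerP z a.
  have h1 : z * z <= a * z by rewrite ler_wpM2r.
  have h2 : 0 <= a ^+ 2 by exact: sqr_ge0.
  have h4 : a ^+ 2 * (z * z) <= a ^+ 2 * (a * z) by rewrite ler_wpM2l.
  have h3 : 0 <= (z ^+ 2) ^+ 2 by rewrite exprn_ge0 // exprn_ge0.
  have e1 : a ^+ 2 * z ^+ 2 = a ^+ 2 * (z * z) by ring.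
  have e2 : a ^+ 3 * z = a ^+ 2 * (a * z) by ring.
  lra.
have h2 : 0 <= z ^+ 3 * a by rewrite mulr_ge0 // exprn_ge0.
nra.
Qed.

Lemma Ysum_D s : Ysum s = Dsum s - (size s)%:R * mu.
Proof.
elim: s => [|a s IH]; first by rewrite /Ysum /Dsum !big_nil mul0r subr0.
rewrite /Ysum /Dsum !big_cons -/(Ysum s) -/(Dsum s) IH /= -natr1; ring.
Qed.

Lemma EN_D N : EN N Dsum = N%:R * mu.
Proof.
rewrite (EN_ext (g := fun s => Ysum s + N%:R * mu)); last first.
  by move=> s sz; rewrite Ysum_D sz subrK.
by rewrite EN_add EN_Y EN_const add0r.
Qed.

Lemma EN_absY N : EN N (fun s => `|Ysum s|) <= 2 * EN N (fun s => `|Dsum s|).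
Proof.
apply: le_trans (_ : EN N (fun s => `|Dsum s| + `|N%:R * mu|) <= _).
  apply: EN_mono_sz => s sz; rewrite Ysum_D sz; exact: ler_normB.
rewrite EN_add EN_const -EN_D.
have := EN_abs N Dsum; lra.
Qed.

Lemma main_fin n : (0 < n)%N ->
  4 * n%:R * sig2 - 16 <= 128 * EN (n * n) (fun s => `|Dsum s|).
Proof.
move=> n0.
set E := EN (n * n) (fun s => `|Dsum s|).
have hY := EN_absY (n * n).
set EY := EN (n * n) (fun s => `|Ysum s|) in hY.
set a : R := 4 * n%:R.
have a0 : 0 <= a by rewrite mulr_ge0.
have key : EN (n * n) (fun s => a ^+ 2 * Ysum s ^+ 2) <=
           EN (n * n) (fun s => a ^+ 3 * `|Ysum s| + Ysum s ^+ 4).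
  by apply: EN_mono => s; apply: quart_ineq.
rewrite EN_scale EN_add EN_scale EN_Y2 EN_Y4 -/EY natrM in key.
have n1 : 1 <= (n%:R : R) by rewrite ler1n.
have s0 := sig2_ge0; have s4 := sig2_le; have m16 := m4_le.
set x : R := n%:R in n1 key *.
rewrite /a in key.
have e1 : sig2 ^+ 2 <= 4 * sig2 by nra.
have EY0 : 0 <= EY by rewrite /EY -(EN_const (n * n) 0); apply: EN_mono.
have k2 : 16 * x ^+ 4 * sig2 <= 64 * x ^+ 3 * EY + 16 * x ^+ 2 + 12 * x ^+ 4 * sig2.
  have xx0 : 0 <= x * x by nra.
  have t1 : x * x * m4 <= x * x * 16 by rewrite ler_wpM2l.
  have t2 : 3 * (x * x) * (x * x - 1) * sig2 ^+ 2 <= 12 * x ^+ 4 * sig2.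
    have p0 : 0 <= x * x - 1 by nra.
    have P0 : 0 <= x * x * (x * x - 1) by rewrite mulr_ge0.
    have h : x * x * (x * x - 1) * sig2 ^+ 2 <= x * x * (x * x - 1) * (4 * sig2).
      by rewrite ler_wpM2l.
    have h' : x * x * (x * x - 1) * (4 * sig2) <= x * x * (x * x) * (4 * sig2).
      by rewrite ler_wpM2r ?mulr_ge0 // ler_wpM2l // lerBlDr lerDl.
    have : 3 * (x * x) * (x * x - 1) * sig2 ^+ 2 = 3 * (x * x * (x * x - 1) * sig2 ^+ 2) by ring.
    have : 12 * x ^+ 4 * sig2 = 3 * (x * x * (x * x) * (4 * sig2)) by ring.
    lra.
  have : x * x * 16 = 16 * x ^+ 2 by ring.
  have : (4 * x) ^+ 2 * (x * x * sig2) = 16 * x ^+ 4 * sig2 by ring.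
  have : (4 * x) ^+ 3 * EY = 64 * x ^+ 3 * EY by ring.
  lra.
have k3 : x ^+ 3 * (4 * x * sig2 - 16) <= x ^+ 3 * (64 * EY).
  have : 16 * x ^+ 2 <= 16 * x ^+ 3 by nra.
  have : x ^+ 3 * (4 * x * sig2 - 16) = 4 * x ^+ 4 * sig2 - 16 * x ^+ 3 by ring.
  have : x ^+ 3 * (64 * EY) = 64 * x ^+ 3 * EY by ring.
  lra.
have x3 : 0 < x ^+ 3 by rewrite exprn_gt0 //; lra.
rewrite ler_pM2l // in k3.
move: hY; rewrite -/E /a -/x => hY; lra.
Qed.

Fixpoint alls (N : nat) : seq (seq A) :=
  if N is N'.+1 then [seq a :: s | a <- steps, s <- alls N'] else [:: [::]].
Definition wt (s : seq A) := \prod_(a <- s) pi a.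

Lemma EN_alls N f : EN N f = \sum_(s <- alls N) f s * wt s.
Proof.
elim: N f => [|N IH] f /=; first by rewrite big_seq1 /wt big_nil mulr1.
rewrite big_allpairs_dep; apply: eq_bigr => a _.
rewrite IH mulr_sumr; apply: eq_bigr => s _.
by rewrite /wt big_cons mulrCA mulrA.
Qed.

Lemma alls_uniq N : uniq steps -> uniq (alls N).
Proof.
move=> us; elim: N => [//|N IH] /=.
apply: allpairs_uniq => // [[a s] [b t]] _ _ /= [-> ->].
by [].
Qed.

Lemma mem_alls N s : size s = N -> all (mem steps) s -> s \in alls N.
Proof.
elim: N s => [|N IH] [|a s] //= [sz] /andP[ha hs].
by apply/allpairsP; exists (a, s) => /=; split => //; apply: IH.
Qed.

Lemma alls_size N s : s \in alls N -> size s = N.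
Proof.
elim: N s => [|N IH] s /=; first by rewrite inE => /eqP ->.
by case/allpairsP => [[a t] /= [_ ht ->]] /=; rewrite (IH _ ht).
Qed.

End Walk.


Section BigU.
Variables (R : realType) (d0 : measure_display) (T : measurableType d0).
Variable (mu : {measure set T -> \bar R}).

Lemma in_bigsetU (S : eqType) (r : seq S) (Pr : pred S) (F : S -> set T) x :
  (\big[setU/set0]_(i <- r | Pr i) F i) x <-> exists i, [/\ i \in r, Pr i & F i x].
Proof.
elim: r => [|a r IH]; first by rewrite big_nil; split => // [[i []]].
rewrite big_cons; case: ifPn => Pa.
  split.
    case => [Fa|/IH [i [ir Pi Fi]]]; first by exists a; rewrite inE eqxx.
    by exists i; rewrite inE ir orbT.
  case => i [] /[!inE] /orP[/eqP ->|ir] Pi Fi; first by left.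
  by right; apply/IH; exists i.
rewrite IH; split => [[i [ir Pi Fi]]|[i [] /[!inE] /orP[/eqP ->|ir] Pi Fi]].
- by exists i; rewrite inE ir orbT.
- by rewrite Pi in Pa.
- by exists i.
Qed.

Lemma measure_bigU_seq (S : eqType) (r : seq S) (Pr : pred S) (F : S -> set T) :
  uniq r -> (forall i, measurable (F i)) ->
  (forall i j, i != j -> F i `&` F j = set0) ->
  mu (\big[setU/set0]_(i <- r | Pr i) F i) = (\sum_(i <- r | Pr i) mu (F i))%E.
Proof.
move=> + mF dF; elim: r => [|a r IH]; first by rewrite !big_nil measure0.
rewrite /= => /andP[ar ur]; rewrite !big_cons; case: ifPn => Pa; last exact: IH.
have mU : measurable (\big[setU/set0]_(i <- r | Pr i) F i).
  by apply: bigsetU_measurable => i _; exact: mF.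
rewrite measureU //; first by rewrite -(IH ur).
apply/seteqP; split => // x [Fa /in_bigsetU [i [ir _ Fi]]].
have ai : a != i by apply: contraNneq ar => ->.
by have := dF _ _ ai; move/seteqP => [+ _] => /(_ x (conj Fa Fi)).
Qed.
End BigU.

Section Prob.
Variables (R : realType) (d0 : measure_display) (T : measurableType d0)
  (P : probability T R) (d : nat) (p : 'I_d -> R) (X : 'I_d -> nat -> T -> bool).
Hypothesis hp : forall j, 0 < p j < 1.
Hypothesis mX : forall j k, measurable [set t | X j k t].
Hypothesis PX : forall j k, P [set t | X j k t] = (p j)%:E.
Hypothesis ind : mutually_independent_bool P (fun jk : 'I_d * nat => X jk.1 jk.2).
Variables j1 j2 : 'I_d.
Hypothesis j12 : j1 != j2.

Definition A2 := (bool * bool)%type.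
Definition steps2 : seq A2 := [:: (true, true); (true, false); (false, true); (false, false)].
Definition rho (q : R) (b : bool) := if b then q else 1 - q.
Definition pi2 (a : A2) := rho (p j1) a.1 * rho (p j2) a.2.
Definition vec N t := [seq (X j1 i t, X j2 i t) | i <- iota 0 N].

Lemma mXb j k b : measurable [set t | X j k t = b].
Proof.
case: b; first exact: mX.
have -> : [set t | X j k t = false] = ~` [set t | X j k t].
  by apply/seteqP; split => t /=; case: (X j k t).
exact: measurableC.
Qed.

Lemma PXb j k b : P [set t | X j k t = b] = (rho (p j) b)%:E.
Proof.
case: b; first exact: PX.
have -> : [set t | X j k t = false] = ~` [set t | X j k t].
  by apply/seteqP; split => t /=; case: (X j k t).
by rewrite probability_setC // PX EFinB.
Qed.

Definition FF N := [seq (j1, i) | i <- iota 0 N] ++ [seq (j2, i) | i <- iota 0 N].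
Definition bb (s : seq A2) (jk : 'I_d * nat) :=
  if jk.1 == j1 then (nth (true, true) s jk.2).1 else (nth (true, true) s jk.2).2.

Lemma FF_uniq N : uniq (FF N).
Proof.
rewrite cat_uniq !map_inj_uniq ?iota_uniq //; try by move=> x y [].
rewrite andbT /=; apply/hasPn => /= x /mapP [i _ ->].
apply/mapP => [[k _ [e _]]]; by move: j12; rewrite e eqxx.
Qed.

Lemma nth_vec N t k : (k < N)%N -> nth (true, true) (vec N t) k = (X j1 k t, X j2 k t).
Proof. by move=> kN; rewrite (nth_map 0%N) ?size_iota // nth_iota. Qed.

Lemma size_vec N t : size (vec N t) = N.
Proof. by rewrite size_map size_iota. Qed.

Lemma j21 : (j2 == j1) = false.
Proof. by apply/negbTE; rewrite eq_sym. Qed.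

Lemma atomE N s : size s = N -> [set t | vec N t = s] =
  \bigcap_(jk in [set jk | jk \in FF N]) [set t | X jk.1 jk.2 t = bb s jk].
Proof.
move=> sz; apply/seteqP; split => t /=.
  move=> <- [j i] /=; rewrite mem_cat => /orP[] /mapP [k + [-> ->]];
    rewrite mem_iota add0n => kN; by rewrite /bb /= ?eqxx ?j21 nth_vec.
move=> H; apply: (@eq_from_nth _ (true, true)); rewrite size_vec ?sz // => i iN.
rewrite nth_vec //.
have h1 := H (j1, i); have h2 := H (j2, i).
rewrite /bb /= eqxx j21 in h1 h2.
have m1 : (j1, i) \in FF N by rewrite /FF mem_cat map_f // mem_iota add0n.
have m2 : (j2, i) \in FF N by rewrite /FF mem_cat orbC map_f // mem_iota add0n.
rewrite h1 // h2 //; by case: (nth _ s i).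
Qed.

Lemma P_atom N s : size s = N -> P [set t | vec N t = s] = (wt pi2 s)%:E.
Proof.
move=> sz; rewrite atomE // ind ?FF_uniq // /FF big_cat !big_map /=.
under eq_bigr do rewrite /bb /= eqxx PXb.
under [X in (_ * X)%E]eq_bigr do rewrite /bb /= j21 PXb.
rewrite !prodEFin -EFinM; congr EFin.
rewrite /wt (big_nth (true, true)) sz /index_iota subn0 -big_split /=.
by [].
Qed.

Lemma m_atom N s : measurable [set t | vec N t = s].
Proof.
have [sz|nsz] := eqVneq (size s) N.
  rewrite atomE //; apply: fin_bigcap_measurable => // i _; exact: mXb.
have -> : [set t | vec N t = s] = set0.
  by apply/seteqP; split => t //= e; move: nsz; rewrite -e size_vec eqxx.
exact: measurable0.
Qed.

Lemma P_event N (Q : pred (seq A2)) :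
  P [set t | Q (vec N t)] = (EN steps2 pi2 N (fun s => ((Q s)%:R : R)))%:E.
Proof.
have -> : [set t | Q (vec N t)] =
    \big[setU/set0]_(s <- alls steps2 N | Q s) [set t | vec N t = s].
  apply/seteqP; split => t /=.
    move=> Qt; apply/in_bigsetU; exists (vec N t); split => //.
    apply: mem_alls; first exact: size_vec.
    by apply/allP => -[[] []] _.
  by move/in_bigsetU => [s [_ Qs e]]; rewrite /= in e; rewrite e.
rewrite measure_bigU_seq ?alls_uniq //; last 2 first.
- exact: m_atom.
- move=> s s' ss'; apply/seteqP; split => t // [/= e1 e2].
  by move: ss'; rewrite -e1 -e2 eqxx.
rewrite big_seq_cond.
rewrite (eq_bigr (fun s => (wt pi2 s)%:E)); last first.
  move=> s /andP[sa _]; exact: (@P_atom N s (alls_size sa)).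
rewrite -big_seq_cond sumEFin EN_alls; congr EFin.
rewrite big_mkcond /=; apply: eq_bigr => s _.
by case: (Q s); rewrite ?mul1r ?mul0r.
Qed.

Definition st2 (a : A2) : R := (a.1 : nat)%:R - (a.2 : nat)%:R.

Lemma Dt_vec N k t : (k <= N)%N ->
  Dt st2 k (vec N t) = (partial_sum X j1 k t)%:R - (partial_sum X j2 k t)%:R.
Proof.
move=> kN; rewrite /Dt /vec -map_take take_iota (minn_idPl kN) /Dsum big_map.
rewrite /partial_sum !natr_sum -sumrB.
have -> : iota 0 k = index_iota 0 k by rewrite /index_iota subn0.
by rewrite big_mkord.
Qed.

Lemma sum_lt_le N m : \sum_(i < N) (((i < m)%N)%:R : R) <= m%:R.
Proof.
suff : \sum_(i < N) (((i < m)%N)%:R : R) <= N%:R /\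
       \sum_(i < N) (((i < m)%N)%:R : R) <= m%:R by case.
elim: N => [|N [IH1 IH2]]; first by rewrite big_ord0 ler0n.
rewrite big_ord_recr /=; case: (ltnP N m) => h /=.
  have hm : (N%:R + 1 : R) <= m%:R by rewrite natr1 ler_nat.
  by rewrite -natr1; split; lra.
by rewrite addr0 -natr1; split; lra.
Qed.

Lemma ev_bigU N (Q : pred (seq A2)) : [set t | Q (vec N t)] =
    \big[setU/set0]_(s <- alls steps2 N | Q s) [set t | vec N t = s].
Proof.
apply/seteqP; split => t /=.
  move=> Qt; apply/in_bigsetU; exists (vec N t); split => //.
  apply: mem_alls; first exact: size_vec.
  by apply/allP => -[[] []] _.
by move/in_bigsetU => [s [_ Qs e]]; rewrite /= in e; rewrite e.
Qed.

Lemma m_ev N (Q : pred (seq A2)) : measurable [set t | Q (vec N t)].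
Proof. by rewrite ev_bigU; apply: bigsetU_measurable => s _; exact: m_atom. Qed.

Definition Bev N m := [set t | Qb st2 m (vec N t)].

Lemma ind_le N i t n : (0 < n)%N ->
  (forall j j', partial_sum X j n t = partial_sum X j' n t) -> (i < N)%N ->
  (\1_(Bev N i.+1) t : R) <= ((i < n.-1)%N)%:R.
Proof.
move=> n0 Heq iN; rewrite indicE.
case: (ltnP i n.-1) => h; first by case: (t \in _).
have nN : (n <= N)%N by rewrite (leq_trans _ iN) // -(prednK n0) ltnS.
case: (boolP (t \in _)) => // /set_mem /= /allP /(_ n).
rewrite mem_iota.
have hn : (0 < n < 1 + i.+1)%N by apply/andP; split; [|move: h n0; clear; lia].
move=> /(_ hn).
by rewrite Dt_vec // (Heq j1 j2) subrr eqxx.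
Qed.

Lemma J_ge N t : ((\sum_(i < N) (\1_(Bev N i.+1) t : R))%:E <= rencontre_time R X t)%E.
Proof.
apply: le_ereal_inf_tmp => _ [n [n0 Heq] <-]; rewrite lee_fin.
apply: le_trans (_ : \sum_(i < N) (((i < n.-1)%N)%:R : R) <= _).
  by apply: ler_sum => i _; apply: ind_le.
apply: le_trans (sum_lt_le _ _) _.
by rewrite ler_nat leq_pred.
Qed.

Lemma J_ge0 t : (0 <= rencontre_time R X t)%E.
Proof. by apply: le_ereal_inf_tmp => _ [n _ <-]; rewrite lee_fin ler0n. Qed.

Import HBNNSimple.

Lemma int_ge N :
  ((\sum_(1 <= m < N.+1) EN steps2 pi2 N (fun s => ((Qb st2 m s)%:R : R)))%:E <=
   \int[P]_t rencontre_time R X t)%E.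
Proof.
have mB m : measurable (Bev N m) by exact: m_ev.
pose h := sum_nnsfun (fun i => indic_nnsfun R (mB i.+1)) N.
rewrite ge0_integralTE; last exact: J_ge0.
apply: (@le_trans _ _ (sintegral P h)); last first.
  apply: ereal_sup_ubound; exists h => // t; rewrite sum_nnsfunE; exact: J_ge.
rewrite -integralT_nnsfun.
under eq_integral => t _ do rewrite /h sum_nnsfunE -sumEFin.
rewrite ge0_integral_sum //; last 2 first.
- move=> i; apply/measurable_EFinP; exact: measurable_indic.
- by move=> i t _; rewrite lee_fin.
have hI i : (\int[P]_x (indic_nnsfun R (mB i) x)%:E = P (Bev N i))%E.
  by rewrite -[in RHS](setIT (Bev N i)) -integral_indic.
rewrite (eq_bigr (fun i : 'I_N => P (Bev N i.+1))); last by move=> i _; exact: hI.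
under eq_bigr => i _ do rewrite /Bev P_event.
by rewrite sumEFin lee_fin big_add1 big_mkord.
Qed.

Lemma pi2_ge0 a : 0 <= pi2 a.
Proof.
have /andP[a0 a1] := hp j1; have /andP[b0 b1] := hp j2.
case: a => [[] []]; rewrite /pi2 /rho /=; apply: mulr_ge0; lra.
Qed.

Lemma pi2_sum : \sum_(a <- steps2) pi2 a = 1.
Proof. rewrite !big_cons big_nil /pi2 /rho /=; ring. Qed.

Lemma st2_bd a : `|st2 a| <= 1.
Proof. by case: a => [[] []]; rewrite /st2 /= ?mulr1n ?mulr0n ?subrr ?normr0 ?subr0 ?sub0r ?normrN ?normr1 ?ler01. Qed.

Lemma sig2_val : sig2 steps2 pi2 st2 = p j1 * (1 - p j1) + p j2 * (1 - p j2).
Proof.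
rewrite /sig2 /= /Ysum /mu !big_cons !big_nil /pi2 /rho /st2 /=; ring.
Qed.

Lemma sig2_gt0 : 0 < sig2 steps2 pi2 st2.
Proof.
rewrite sig2_val.
have /andP[a0 a1] := hp j1; have /andP[b0 b1] := hp j2.
apply: addr_gt0; apply: mulr_gt0; lra.
Qed.

Lemma main_prob : (\int[P]_t rencontre_time R X t = +oo)%E.
Proof.
have sp := sig2_gt0.
set sg := sig2 steps2 pi2 st2 in sp.
apply/eqyP => M M0.
pose c := (128 * M + 16) / (4 * sg).
pose n := (Num.truncn c).+1.
have cn : c < n%:R by exact: truncnS_gt.
have n0 : (0 < n)%N by [].
apply: le_trans (int_ge (n * n)); rewrite lee_fin.
apply: le_trans (sumQ_ge pi2_ge0 pi2_sum st2_bd _).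
have := main_fin pi2_ge0 pi2_sum st2_bd n0; rewrite -/sg.
have hc : c * (4 * sg) = 128 * M + 16.
  by rewrite /c divfK // mulf_neq0 // gt_eqF.
have : c * (4 * sg) < n%:R * (4 * sg) by rewrite ltr_pM2r ?mulr_gt0.
lra.
Qed.

End Prob.

About main_prob.
Unset Implicit Arguments.

Theorem theorem10 (R : realType) (d0 : measure_display) (T : measurableType d0)
  (P : probability T R) (d : nat) (p : 'I_d -> R)
  (X : 'I_d -> nat -> T -> bool) :
  (3 <= d)%N ->
  (forall j, 0 < p j < 1) ->
  (forall j k, measurable [set t | X j k t]) ->
  (forall j k, P [set t | X j k t] = (p j)%:E) ->
  mutually_independent_bool P (fun jk : 'I_d * nat => X jk.1 jk.2) ->
  (\int[P]_t rencontre_time R X t = +oo)%E.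
Proof.
move=> d3 hp mX PX ind.
have h0 : (0 < d)%N by apply: leq_trans d3.
have h1 : (1 < d)%N by apply: leq_trans d3.
have j12 : (Ordinal h0) != (Ordinal h1) by [].
exact: (main_prob hp mX PX ind j12).
Qed.
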